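(* There does not exist a closed (Quillen) model structure on the category $\mathrm{UGph}$ of undirected graphs whose class of weak equivalences is $W_U$.
   Context: An undirected graph $X$ consists of a set of nodes $X(0)$, a set of half-arcs $X(1)$, maps $s,t:X(1)\to X(0)$ and an involution $\iota$ of $X(1)$ with $s\circ\iota=t$ (fixed points allowed); morphisms are pairs of maps on nodes and half-arcs commuting with $s,t,\iota$; $\mathrm{UGph}$ is this category. For $p\ge1$, $c^p_U$ has nodes $\mathbb{Z}/p\mathbb{Z}$ and half-arcs $[n]^\pm$ with $s([n]^+)=[n]$, $t([n]^+)=[n+1]$, $s([n]^-)=[n+1]$, $t([n]^-)=[n]$, $\iota([n]^+)=[n]^-$. A $p$-cycle of $X$ is a morphism $h:c^p_U\to X$; it has backtracking if there is $n$ with $h_1([n+1]^+)=h_1([n]^-)$. $W_U$ is the class of morphisms $f:X\to Y$ such that for every $p\ge1$, $h\mapsto f\circ h$ restricts to a bijection from the set of $p$-cycles of $X$ without backtracking onto the set of $p$-cycles of $Y$ without backtracking. A closed model structure is a triple $(\mathrm{Fib},\mathrm{Cof},W)$ with $W$ satisfying 2-out-of-3 such that $(\mathrm{Fib}\cap W,\mathrm{Cof})$ and $(\mathrm{Fib},\mathrm{Cof}\cap W)$ are weak factorization systems (each class is exactly the maps with the appropriate lifting property against the other, and every map factors as (first class)$\circ$(second class)). *)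

(* Defs.v *)
From mathcomp Require Import all_boot.
Set Implicit Arguments. Unset Strict Implicit. Unset Printing Implicit Defensive.

Record UGraph := {
  node : Type;
  harc : Type;
  src : harc -> node;
  tgt : harc -> node;
  inv : harc -> harc;
  inv_invol : forall a, inv (inv a) = a;
  src_inv : forall a, src (inv a) = tgt a
}.

Record hom (X Y : UGraph) := {
  hv : node X -> node Y;
  ha : harc X -> harc Y;
  hom_src : forall a, hv (src a) = src (ha a);
  hom_tgt : forall a, hv (tgt a) = tgt (ha a);
  hom_inv : forall a, ha (inv a) = inv (ha a)
}.

Definition hom_eq (X Y : UGraph) (f g : hom X Y) : Prop :=
  (forall x, hv f x = hv g x) /\ (forall a, ha f a = ha g a).

Definition comp (X Y Z : UGraph) (g : hom Y Z) (f : hom X Y) : hom X Z.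
Proof.
refine {| hv := fun x => hv g (hv f x); ha := fun a => ha g (ha f a) |}.
- by move=> a; rewrite hom_src hom_src.
- by move=> a; rewrite hom_tgt hom_tgt.
- by move=> a; rewrite hom_inv hom_inv.
Defined.

(* The cycle graph c^p_U: nodes Z/pZ (= 'I_p), half-arcs [n]^+ = (n,true),
   [n]^- = (n,false); ordS n is [n+1]. *)
Definition cyc_src p (e : 'I_p * bool) : 'I_p := if e.2 then e.1 else ordS e.1.
Definition cyc_tgt p (e : 'I_p * bool) : 'I_p := if e.2 then ordS e.1 else e.1.
Definition cyc_inv p (e : 'I_p * bool) : 'I_p * bool := (e.1, ~~ e.2).

Definition cycU (p : nat) : UGraph.
Proof.
refine {| node := 'I_p; harc := ('I_p * bool)%type;
          src := @cyc_src p; tgt := @cyc_tgt p; inv := @cyc_inv p |}.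
- by case=> n b; rewrite /cyc_inv /= negbK.
- by case=> n [].
Defined.

Definition backtracking (p : nat) (X : UGraph) (h : hom (cycU p) X) : Prop :=
  exists n : 'I_p, ha h (ordS n, true) = ha h (n, false).

Definition W_U (X Y : UGraph) (f : hom X Y) : Prop :=
  forall p : nat, 0 < p ->
    [/\ (forall h : hom (cycU p) X, ~ backtracking h -> ~ backtracking (comp f h)),
        (forall h h' : hom (cycU p) X, ~ backtracking h -> ~ backtracking h' ->
            hom_eq (comp f h) (comp f h') -> hom_eq h h')
      & (forall k : hom (cycU p) Y, ~ backtracking k ->
            exists2 h : hom (cycU p) X, ~ backtracking h & hom_eq (comp f h) k)].

Definition MorClass := forall X Y : UGraph, hom X Y -> Prop.

Definition llp (A B X Y : UGraph) (i : hom A B) (q : hom X Y) : Prop :=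
  forall (u : hom A X) (v : hom B Y), hom_eq (comp q u) (comp v i) ->
    exists d : hom B X, hom_eq (comp d i) u /\ hom_eq (comp q d) v.

Definition wfs (R L : MorClass) : Prop :=
  [/\ (forall (A B : UGraph) (i : hom A B),
          L A B i <-> (forall (X Y : UGraph) (q : hom X Y), R X Y q -> llp i q)),
      (forall (X Y : UGraph) (q : hom X Y),
          R X Y q <-> (forall (A B : UGraph) (i : hom A B), L A B i -> llp i q))
    & (forall (X Y : UGraph) (f : hom X Y),
          exists (Z : UGraph) (l : hom X Z) (r : hom Z Y),
            [/\ L X Z l, R Z Y r & hom_eq (comp r l) f])].

Definition two_out_of_three (W : MorClass) : Prop :=
  forall (X Y Z : UGraph) (f : hom X Y) (g : hom Y Z),
    (W X Y f -> W Y Z g -> W X Z (comp g f)) /\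
    (W X Y f -> W X Z (comp g f) -> W Y Z g) /\
    (W Y Z g -> W X Z (comp g f) -> W X Y f).

Definition MorInter (P Q : MorClass) : MorClass :=
  fun X Y f => P X Y f /\ Q X Y f.

Definition closed_model_structure (Fib Cof W : MorClass) : Prop :=
  [/\ two_out_of_three W, wfs (MorInter Fib W) Cof & wfs Fib (MorInter Cof W)].

(* Main.v *)
Require Import Defs.
From mathcomp Require Import all_boot.

Set Implicit Arguments. Unset Strict Implicit.

Definition G1 : UGraph.
Proof.
refine {| node := unit; harc := unit; src := fun _ => tt; tgt := fun _ => tt;
          Defs.inv := fun a => a |}; by [].
Defined.

Definition toG1 (X : UGraph) : hom X G1.
Proof. by refine (@Build_hom X G1 (fun _ => tt) (fun _ => tt) _ _ _). Defined.

Definition GE : UGraph.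
Proof.
refine {| node := bool; harc := bool; src := fun b => b; tgt := fun b => ~~ b;
          Defs.inv := negb |}.
- by move=> a; rewrite negbK.
- by [].
Defined.

Definition prodG (X Y : UGraph) : UGraph.
Proof.
refine {| node := (node X * node Y)%type; harc := (harc X * harc Y)%type;
          src := fun a => (src a.1, src a.2); tgt := fun a => (tgt a.1, tgt a.2);
          Defs.inv := fun a => (Defs.inv a.1, Defs.inv a.2) |}.
- by case=> a b /=; rewrite !Defs.inv_invol.
- by case=> a b /=; rewrite !src_inv.
Defined.

Definition pi1 (X Y : UGraph) : hom (prodG X Y) X.
Proof. by refine (@Build_hom (prodG X Y) X (fun x => x.1) (fun a => a.1) _ _ _). Defined.
Definition pi2 (X Y : UGraph) : hom (prodG X Y) Y.
Proof. by refine (@Build_hom (prodG X Y) Y (fun x => x.2) (fun a => a.2) _ _ _). Defined.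
Definition pairh (A X Y : UGraph) (f : hom A X) (g : hom A Y) : hom A (prodG X Y).
Proof.
refine (@Build_hom A (prodG X Y) (fun x => (hv f x, hv g x)) (fun a => (ha f a, ha g a)) _ _ _).
- by move=> a /=; rewrite !hom_src.
- by move=> a /=; rewrite !hom_tgt.
- by move=> a /=; rewrite !hom_inv.
Defined.

Lemma all_I1 (x y : 'I_1) : x = y.
Proof. by rewrite (ord1 x) (ord1 y). Qed.

Definition eL : hom GE (cycU 1).
Proof.
refine (@Build_hom GE (cycU 1) (fun _ => ord0) (fun b => (ord0, b)) _ _ _).
- by move=> a; apply: all_I1.
- by move=> a; apply: all_I1.
- by [].
Defined.

Definition idc : hom (cycU 1) (cycU 1).
Proof. by refine (@Build_hom (cycU 1) (cycU 1) (fun x => x) (fun a => a) _ _ _). Defined.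

Definition swc : hom (cycU 1) (cycU 1).
Proof.
refine (@Build_hom (cycU 1) (cycU 1) (fun x => x) (fun a => (a.1, ~~ a.2)) _ _ _).
- by move=> a; apply: all_I1.
- by move=> a; apply: all_I1.
- by [].
Defined.

Definition cA : hom (cycU 2) (cycU 1).
Proof.
refine (@Build_hom (cycU 2) (cycU 1) (fun _ => ord0) (fun a => (ord0, a.2)) _ _ _).
- by move=> a; apply: all_I1.
- by move=> a; apply: all_I1.
- by [].
Defined.

Definition twoc (Z : UGraph) (z : harc Z) : hom (cycU 2) Z.
Proof.
refine (@Build_hom (cycU 2) Z (fun n : 'I_2 => if val n == 0 then src z else tgt z)
          (fun a : 'I_2 * bool => if (val a.1 == 0) == a.2 then z else Defs.inv z) _ _ _).
- by case=> [[[|[|m]] Hm] [|]] //=; rewrite ?src_inv.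
- by case=> [[[|[|m]] Hm] [|]] //=; rewrite -?src_inv ?Defs.inv_invol.
- by case=> [[[|[|m]] Hm] [|]] //=; rewrite ?Defs.inv_invol.
Defined.

Lemma G1_bt p (hp : 0 < p) (h : hom (cycU p) G1) : backtracking h.
Proof. by exists (Ordinal hp); case: (ha h _); case: (ha h _). Qed.


Lemma GE_bt p (hp : 0 < p) (h : hom (cycU p) GE) : backtracking h.
Proof.
exists (Ordinal hp).
set n := Ordinal hp.
have e1 := hom_tgt h (n, true).
have e2 := hom_src h (ordS n, true).
have e3 := hom_inv h (n, true).
simpl in e1, e2, e3.
change (ha h (n, false) = ~~ ha h (n, true)) in e3.
change (hv h (ordS n) = ~~ ha h (n, true)) in e1.
change (hv h (ordS n) = ha h (ordS n, true)) in e2.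
change (ha h (ordS n, true) = ha h (n, false)).
by rewrite e3 -e2 e1.
Qed.

Lemma idc_nb : ~ backtracking idc.
Proof. by case=> n /= /(congr1 snd). Qed.

Lemma swc_nb : ~ backtracking swc.
Proof. by case=> n /= /(congr1 snd). Qed.

Lemma cA_nb : ~ backtracking cA.
Proof. by case=> n /= /(congr1 snd). Qed.

Lemma pair_nb A X Y (f : hom A X) (g : hom A Y) p (h : hom (cycU p) A) :
  ~ backtracking (Defs.comp f h) -> ~ backtracking (Defs.comp (pairh f g) h).
Proof. by move=> nb [n /= [e1 _]]; apply: nb; exists n. Qed.

Lemma pair_nb' X Y p (f : hom (cycU p) X) (g : hom (cycU p) Y) :
  ~ backtracking f -> ~ backtracking (pairh f g).
Proof. by move=> nb [n /= [e1 _]]; apply: nb; exists n. Qed.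

Lemma hom_eq_G1 X (f g : hom X G1) : hom_eq f g.
Proof. by split=> x; [case: (hv f x); case: (hv g x) | case: (ha f x); case: (ha g x)]. Qed.

Theorem theorem4p9 :
  ~ exists Fib Cof W : MorClass,
      closed_model_structure Fib Cof W /\
      (forall (X Y : UGraph) (f : hom X Y), W X Y f <-> W_U f).
Proof.
case=> Fib [Cof [W [[W23 [wfs1L wfs1R wfs1F] [wfs2L wfs2R wfs2F]] HW]]].
have [RL [j [r [jC rF _]]]] := wfs2F _ _ (toG1 (cycU 1)).
have [Z [c [q [cC qF _]]]] := wfs1F _ _ (toG1 GE).
have qU : W_U q := (HW _ _ q).1 qF.2.
have Zfix : forall z : harc Z, Defs.inv z = z.
  move=> z.
  have pF : MorInter Fib W (pi1 (cycU 1) Z).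
    apply/wfs1R => A B i iC u v euv.
    have [d [dl dr]] := (proj1 (wfs1R _ _ q) qF) A B i iC
                          (Defs.comp (pi2 _ _) u) (toG1 B) (hom_eq_G1 _ _).
    exists (pairh v d); split; split=> x /=.
    - by move: (proj1 dl x) (proj1 euv x) => /= -> <-; case: (hv u x).
    - by move: (proj2 dl x) (proj2 euv x) => /= -> <-; case: (ha u x).
    - by [].
    - by [].
  have [_ inj _] := (HW _ _ _).1 pF.2 2 isT.
  have := inj (pairh cA (twoc z)) (pairh cA (twoc (Defs.inv z)))
     (pair_nb' cA_nb) (pair_nb' cA_nb).
  case.
    by split.
  move=> _ /(_ (Ordinal (isT : 0 < 2), true)) /= /(congr1 snd) /=.
  by move=> <-.
have cW : MorInter Cof W c.
  split=> //; apply/HW => p hp; split.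
  - by move=> h nb; case: nb; exact: GE_bt.
  - by move=> h h' nb; case: nb; exact: GE_bt.
  - move=> k nb; case: (qU p hp) => qa _ _.
    by case: (qa k nb); exact: G1_bt.
have [d [dl _]] := (proj1 (wfs2L _ _ c) cW) _ _ r rF (Defs.comp j eL) (toG1 Z)
                      (hom_eq_G1 _ _).
have e1 := proj2 dl true.
have e2 := proj2 dl false.
simpl in e1, e2.
have ecf : ha c false = ha c true.
  by rewrite -[in RHS](Zfix (ha c true)) -hom_inv.
rewrite ecf e1 in e2.
have [_ inj _] := (HW _ _ _).1 jC.2 1 isT.
have := inj idc swc idc_nb swc_nb.
case.
  split=> x //=.
  by case: x => n [] /=; rewrite (ord1 n).
by move=> _ /(_ (ord0, true)) /= /(congr1 snd).
Qed.
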